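(* Let $n\ge3$, $m_1,\dots,m_n>0$, and let the configuration $\theta_i=\pi/2$, $\varphi_i=\varphi_i^0$ ($i=1,\dots,n$) on the equator be a fixed point. Let $\omega\in\mathbb R$, let $X_\omega$ be the point $\theta_i=\pi/2$, $\varphi_i=\varphi_i^0$, $p_{\theta_i}=0$, $p_{\varphi_i}=\omega m_i$, and let $L$ be the Jacobian matrix at $X_\omega$ of the vector field of the rotating system below, with variables ordered as $(\theta_1,\dots,\theta_n,\varphi_1,\dots,\varphi_n,p_{\theta_1},\dots,p_{\theta_n},p_{\varphi_1},\dots,p_{\varphi_n})$. Then $$L=\begin{bmatrix}0&0&M^{-1}&0\\0&0&0&M^{-1}\\H_\omega&0&0&0\\0&G&0&0\end{bmatrix},$$ where $M=\mathrm{diag}(m_1,\dots,m_n)$, $H_\omega=H-\omega^2M$, $H=\big[\frac{\partial^2V}{\partial\theta_i\partial\theta_j}\big]$ and $G=\big[\frac{\partial^2V}{\partial\varphi_i\partial\varphi_j}\big]$ evaluated at the configuration, and these have entries $$H_{ij}=\frac{m_im_j}{\sin^3d_{ij}},\quad H_{ii}=-\sum_{j\neq i}H_{ij}\cos d_{ij},\quad G_{ij}=\frac{-2m_im_j\cos d_{ij}}{\sin^3 d_{ij}},\quad G_{ii}=-\sum_{j\neq i}G_{ij}\qquad(i\neq j).$$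
   Context: Positions on the unit sphere: $\mathbf q_i=(\sin\theta_i\cos\varphi_i,\sin\theta_i\sin\varphi_i,\cos\theta_i)$; $d_{ij}=\arccos(\mathbf q_i\cdot\mathbf q_j)$; the force function is $V=\sum_{i<j}m_im_j\cot d_{ij}$ on $W=\{d_{ij}\notin\{0,\pi\},\ i\ne j\}\subset(\mathbb S^2)^n$, and $U=-V$. A fixed point is a critical point of $V$ on $W$. The rotating system (the $n$-body problem on $\mathbb S^2$ written in coordinates rotating about the $z$-axis with angular velocity $\omega$) is: for $i=1,\dots,n$, $\dot\theta_i=\frac{p_{\theta_i}}{m_i}$, $\dot\varphi_i=\frac{p_{\varphi_i}}{m_i\sin^2\theta_i}-\omega$, $\dot p_{\theta_i}=\frac{p_{\varphi_i}^2\cos\theta_i}{m_i\sin^3\theta_i}-\frac{\partial U}{\partial\theta_i}$, $\dot p_{\varphi_i}=-\frac{\partial U}{\partial\varphi_i}$. The point $X_\omega$ is a rest point of this system (it corresponds to the relative equilibrium obtained by rotating the fixed point uniformly with angular velocity $\omega$). *)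

(* Defs.v *)
From Stdlib Require Import Reals Lra.
From Coquelicot Require Import Coquelicot.
Open Scope R_scope.

Fixpoint sumR (n : nat) (f : nat -> R) : R :=
  match n with O => 0 | S k => sumR k f + f k end.

Definition upd (x : nat -> R) (i : nat) (t : R) : nat -> R :=
  fun k => if Nat.eqb k i then t else x k.

(* q_i . q_j for positions on the unit sphere given by angles theta, phi. *)
Definition qdot (th ph : nat -> R) (i j : nat) : R :=
  sin (th i) * cos (ph i) * (sin (th j) * cos (ph j))
  + sin (th i) * sin (ph i) * (sin (th j) * sin (ph j))
  + cos (th i) * cos (th j).

Definition sdist (th ph : nat -> R) (i j : nat) : R := acos (qdot th ph i j).

Definition Vpot (n : nat) (m : nat -> R) (th ph : nat -> R) : R :=
  sumR n (fun i => sumR n (fun j =>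
    if Nat.ltb i j then m i * m j * (cos (sdist th ph i j) / sin (sdist th ph i j))
    else 0)).

Definition Upot (n : nat) (m : nat -> R) (th ph : nat -> R) : R :=
  - Vpot n m th ph.

Definition dth (F : (nat -> R) -> (nat -> R) -> R) (i : nat) (th ph : nat -> R) : R :=
  Derive (fun s => F (upd th i s) ph) (th i).
Definition dph (F : (nat -> R) -> (nat -> R) -> R) (i : nat) (th ph : nat -> R) : R :=
  Derive (fun s => F th (upd ph i s)) (ph i).

(* Phase-space points are vectors X : nat -> R with ordering
   (theta_1..theta_n, phi_1..phi_n, p_theta_1..p_theta_n, p_phi_1..p_phi_n),
   i.e. theta_i = X i, phi_i = X (n+i), p_theta_i = X (2n+i), p_phi_i = X (3n+i)
   (0-based indices i < n). *)
Definition thetas (n : nat) (X : nat -> R) : nat -> R := fun i => X i.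
Definition phis (n : nat) (X : nat -> R) : nat -> R := fun i => X (n + i)%nat.
Definition pths (n : nat) (X : nat -> R) : nat -> R := fun i => X (2 * n + i)%nat.
Definition pphs (n : nat) (X : nat -> R) : nat -> R := fun i => X (3 * n + i)%nat.

Definition rotfield (n : nat) (m : nat -> R) (w : R) (X : nat -> R) (k : nat) : R :=
  let th := thetas n X in let ph := phis n X in
  let pt := pths n X in let pp := pphs n X in
  let i := Nat.modulo k n in
  match Nat.div k n with
  | 0%nat => pt i / m i
  | 1%nat => pp i / (m i * sin (th i) ^ 2) - w
  | 2%nat => pp i ^ 2 * cos (th i) / (m i * sin (th i) ^ 3) - dth (Upot n m) i th ph
  | 3%nat => - dph (Upot n m) i th ph
  | _ => 0
  end.

Definition Hoff (m : nat -> R) (d : nat -> nat -> R) (i j : nat) : R :=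
  m i * m j / sin (d i j) ^ 3.
Definition Hexp (n : nat) (m : nat -> R) (d : nat -> nat -> R) (i j : nat) : R :=
  if Nat.eqb i j then
    - sumR n (fun l => if Nat.eqb l i then 0 else Hoff m d i l * cos (d i l))
  else Hoff m d i j.
Definition Goff (m : nat -> R) (d : nat -> nat -> R) (i j : nat) : R :=
  -2 * m i * m j * cos (d i j) / sin (d i j) ^ 3.
Definition Gexp (n : nat) (m : nat -> R) (d : nat -> nat -> R) (i j : nat) : R :=
  if Nat.eqb i j then
    - sumR n (fun l => if Nat.eqb l i then 0 else Goff m d i l)
  else Goff m d i j.

Definition Lblock (n : nat) (m : nat -> R) (d : nat -> nat -> R) (w : R)
  (k l : nat) : R :=
  let i := Nat.modulo k n in let j := Nat.modulo l n in
  match Nat.div k n, Nat.div l n with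
  | 0%nat, 2%nat => if Nat.eqb i j then / m i else 0
  | 1%nat, 3%nat => if Nat.eqb i j then / m i else 0
  | 2%nat, 0%nat => Hexp n m d i j - w ^ 2 * (if Nat.eqb i j then m i else 0)
  | 3%nat, 1%nat => Gexp n m d i j
  | _, _ => 0
  end.

(* Main.v *)
Require Import Defs.
From Stdlib Require Import Reals Lra Lia.
From Coquelicot Require Import Coquelicot.
Open Scope R_scope.

Lemma sumR_ext n f g : (forall k, (k < n)%nat -> f k = g k) -> sumR n f = sumR n g.
Proof. induction n; simpl; intros H; auto. rewrite IHn by (intros; apply H; lia). rewrite H by lia. auto. Qed.

Lemma sumR_plus n f g : sumR n (fun k => f k + g k) = sumR n f + sumR n g.
Proof. induction n; simpl; [lra|]. rewrite IHn. lra. Qed.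

Lemma sumR_zero n f : (forall k, (k < n)%nat -> f k = 0) -> sumR n f = 0.
Proof. induction n; simpl; intros H; auto. rewrite IHn by (intros; apply H; lia). rewrite H by lia. lra. Qed.

Lemma sumR_single n i x : (i < n)%nat -> sumR n (fun k => if Nat.eqb k i then x else 0) = x.
Proof.
  induction n; simpl; intros H; [lia|].
  destruct (Nat.eq_dec i n).
  - subst. rewrite Nat.eqb_refl. rewrite sumR_zero. lra.
    intros k Hk. destruct (Nat.eqb_spec k n); [lia|auto].
  - rewrite IHn by lia. destruct (Nat.eqb_spec n i); [lia|]. lra.
Qed.

Lemma is_derive_sumR n (f : R -> nat -> R) (f' : nat -> R) x :
  (forall k, (k < n)%nat -> is_derive (fun t => f t k) x (f' k)) ->
  is_derive (fun t => sumR n (f t)) x (sumR n f').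
Proof.
  induction n; simpl; intros H.
  - apply (is_derive_const 0 x).
  - apply (is_derive_plus (fun t => sumR n (f t)) (fun t => f t n)).
    + apply IHn. intros; apply H; lia.
    + apply H; lia.
Qed.

Lemma pair_diag n i (f : nat -> nat -> R) (K : nat -> R) : (i < n)%nat ->
  (forall a b, (a < n)%nat -> (b < n)%nat -> (a < b)%nat ->
     f a b = (if Nat.eqb a i then K b else if Nat.eqb b i then K a else 0)) ->
  sumR n (fun a => sumR n (fun b => if Nat.ltb a b then f a b else 0)) =
  sumR n (fun l => if Nat.eqb l i then 0 else K l).
Proof.
  intros Hi H.
  transitivity (sumR n (fun a => (if Nat.eqb a i then sumR n (fun b => if Nat.ltb i b then K b else 0) else 0)
     + (if Nat.ltb a i then K a else 0))).
  - apply sumR_ext. intros a Ha.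
    destruct (Nat.eqb_spec a i).
    + subst. rewrite (sumR_ext _ _ (fun b => if Nat.ltb i b then K b else 0)).
      * rewrite Nat.ltb_irrefl. lra.
      * intros b Hb. destruct (Nat.ltb_spec i b); auto.
        rewrite H by auto. rewrite Nat.eqb_refl. auto.
    + rewrite (sumR_ext _ _ (fun b => if Nat.eqb b i then (if Nat.ltb a i then K a else 0) else 0)).
      * rewrite sumR_single by auto. lra.
      * intros b Hb. destruct (Nat.ltb_spec a b).
        -- rewrite H by auto. destruct (Nat.eqb_spec a i); [congruence|].
           destruct (Nat.eqb_spec b i); auto. subst. destruct (Nat.ltb_spec a i); auto; lia.
        -- destruct (Nat.eqb_spec b i); auto. subst. destruct (Nat.ltb_spec a i); auto; lia.
  - rewrite sumR_plus.
    rewrite (sumR_single n i) by auto.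
    rewrite <- sumR_plus. apply sumR_ext. intros l Hl.
    destruct (Nat.eqb_spec l i); destruct (Nat.ltb_spec i l); destruct (Nat.ltb_spec l i); try lia; lra.
Qed.

Lemma pair_off n i j (f : nat -> nat -> R) x : (i < n)%nat -> (j < n)%nat -> i <> j ->
  (forall a b, (a < n)%nat -> (b < n)%nat -> (a < b)%nat ->
     f a b = (if orb (andb (Nat.eqb a i) (Nat.eqb b j)) (andb (Nat.eqb a j) (Nat.eqb b i)) then x else 0)) ->
  sumR n (fun a => sumR n (fun b => if Nat.ltb a b then f a b else 0)) = x.
Proof.
  intros Hi Hj Hij H.
  transitivity (sumR n (fun a => (if Nat.eqb a i then (if Nat.ltb i j then x else 0) else 0)
     + (if Nat.eqb a j then (if Nat.ltb j i then x else 0) else 0))).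
  - apply sumR_ext. intros a Ha.
    destruct (Nat.eqb_spec a i); destruct (Nat.eqb_spec a j); try (subst; lia).
    + subst. rewrite (sumR_ext _ _ (fun b => if Nat.eqb b j then (if Nat.ltb i j then x else 0) else 0)).
      * rewrite sumR_single by auto. lra.
      * intros b Hb. destruct (Nat.ltb_spec i b).
        -- rewrite H by auto. rewrite Nat.eqb_refl. simpl.
           destruct (Nat.eqb_spec b j); destruct (Nat.eqb_spec i j); simpl; try lia; auto.
           subst. destruct (Nat.ltb_spec i j); auto; lia.
        -- destruct (Nat.eqb_spec b j); auto. subst. destruct (Nat.ltb_spec i j); auto; lia.
    + subst. rewrite (sumR_ext _ _ (fun b => if Nat.eqb b i then (if Nat.ltb j i then x else 0) else 0)).
      * rewrite sumR_single by auto. lra.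
      * intros b Hb. destruct (Nat.ltb_spec j b).
        -- rewrite H by auto. rewrite Nat.eqb_refl. simpl.
           destruct (Nat.eqb_spec b i); destruct (Nat.eqb_spec j i); simpl; try lia; auto;
           rewrite ?andb_false_r; simpl; auto.
           subst. destruct (Nat.ltb_spec j i); auto; lia.
        -- destruct (Nat.eqb_spec b i); auto. subst. destruct (Nat.ltb_spec j i); auto; lia.
    + rewrite sumR_zero; [lra|]. intros b Hb. destruct (Nat.ltb_spec a b); auto.
      rewrite H by auto. destruct (Nat.eqb_spec a i); destruct (Nat.eqb_spec a j); try lia; auto.
  - rewrite sumR_plus, !sumR_single by auto.
    destruct (Nat.ltb_spec i j); destruct (Nat.ltb_spec j i); lia || lra.
Qed.

Definition gf (c : R) : R := c / sqrt (1 - c * c).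
Definition gd (c : R) : R := / ((1 - c * c) * sqrt (1 - c * c)).

Lemma cot_acos c : cos (acos c) / sin (acos c) = gf c.
Proof.
  unfold gf. destruct (Rle_dec c (-1)) as [H|H].
  - unfold acos. destruct (Rle_dec c (-1)); [|lra].
    rewrite cos_PI, sin_PI, sqrt_neg_0 by nra. unfold Rdiv. rewrite Rinv_0. ring.
  - destruct (Rle_dec 1 c) as [H1|H1].
    + unfold acos. destruct (Rle_dec c (-1)); [lra|]. destruct (Rle_dec 1 c); [|lra].
      rewrite cos_0, sin_0, sqrt_neg_0 by nra. unfold Rdiv. rewrite !Rinv_0. ring.
    + rewrite cos_acos, sin_acos by lra. unfold Rsqr. auto.
Qed.

Lemma gf_deriv c : -1 < c < 1 -> is_derive gf c (gd c).
Proof.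
  intros H. unfold gf, gd. auto_derive.
  - assert (0 < 1 - c*c) by nra. split; [lra|]. split; auto.
    apply Rgt_not_eq, sqrt_lt_R0. lra.
  - replace (1 + - (c*c)) with (1 - c*c) by ring.
    assert (Hp : 0 < 1 - c*c) by nra.
    assert (Hs := sqrt_sqrt (1 - c*c) (Rlt_le _ _ Hp)).
    assert (Hq := sqrt_lt_R0 _ Hp).
    set (s := sqrt (1 - c*c)) in *. clearbody s. rewrite <- Hs. field_simplify; [|lra..]. replace (2 * s ^ 2 + 2 * c ^ 2) with 2 by (simpl; nra). field. lra.
Qed.

Definition gdd (c : R) : R := 3 * c / ((1 - c * c) * (1 - c * c) * sqrt (1 - c * c)).

Lemma gd_deriv c : -1 < c < 1 -> is_derive gd c (gdd c).
Proof.
  intros H. unfold gdd, gd.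
  assert (Hp : 0 < 1 - c*c) by nra.
  assert (Hs := sqrt_sqrt (1 - c*c) (Rlt_le _ _ Hp)).
  assert (Hq := sqrt_lt_R0 _ Hp).
  auto_derive; replace (1 + - (c*c)) with (1 - c*c) by ring.
  - repeat split; try lra. apply Rgt_not_eq; nra.
  - set (s := sqrt (1 - c*c)) in *. clearbody s. rewrite <- Hs. field. lra.
Qed.

Definition Cm (ph : nat -> R) (a b : nat) : R := cos (ph a) * cos (ph b) + sin (ph a) * sin (ph b).
Definition Pu (th ph : nat -> R) (a b : nat) : R := cos (th a) * sin (th b) * Cm ph a b - sin (th a) * cos (th b).
Definition Qm (ph : nat -> R) (a b : nat) : R := - sin (ph a) * cos (ph b) + cos (ph a) * sin (ph b).
Definition Dth (th ph : nat -> R) (i a b : nat) : R :=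
  (if Nat.eqb a i then Pu th ph a b else 0) + (if Nat.eqb b i then Pu th ph b a else 0).
Definition Dph (th ph : nat -> R) (i a b : nat) : R :=
  sin (th a) * sin (th b) * ((if Nat.eqb a i then Qm ph a b else 0) + (if Nat.eqb b i then Qm ph b a else 0)).

Lemma qdot_dth th ph i a b : a <> b ->
  is_derive (fun s => qdot (upd th i s) ph a b) (th i) (Dth th ph i a b).
Proof.
  intros Hab. unfold qdot, upd, Dth, Pu, Cm.
  destruct (Nat.eqb_spec a i); destruct (Nat.eqb_spec b i); try (subst; lia);
  try subst; auto_derive; auto; ring.
Qed.

Lemma qdot_dph th ph i a b : a <> b ->
  is_derive (fun s => qdot th (upd ph i s) a b) (ph i) (Dph th ph i a b).
Proof.
  intros Hab. unfold qdot, upd, Dph, Qm.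
  destruct (Nat.eqb_spec a i); destruct (Nat.eqb_spec b i); try (subst; lia);
  try subst; auto_derive; auto; ring.
Qed.

Lemma comp' (f g : R -> R) x df dg : is_derive f (g x) df -> is_derive g x dg ->
  is_derive (fun t => f (g t)) x (df * dg).
Proof.
  intros H1 H2. replace (df * dg) with (scal dg df).
  - apply (is_derive_comp f g); auto.
  - unfold scal; simpl; unfold mult; simpl. ring.
Qed.

Definition Vn (n : nat) (m : nat -> R) (th ph : nat -> R) : R :=
  sumR n (fun a => sumR n (fun b =>
    if Nat.ltb a b then m a * m b * gf (qdot th ph a b) else 0)).

Lemma Vpot_Vn n m th ph : Vpot n m th ph = Vn n m th ph.
Proof.
  unfold Vpot, Vn. apply sumR_ext. intros a _. apply sumR_ext. intros b _.
  destruct (Nat.ltb a b); auto. unfold sdist. rewrite cot_acos. auto.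
Qed.

Definition Ft (n : nat) (m : nat -> R) (th ph : nat -> R) (i : nat) : R :=
  sumR n (fun a => sumR n (fun b =>
    if Nat.ltb a b then m a * m b * (gd (qdot th ph a b) * Dth th ph i a b) else 0)).
Definition Fp (n : nat) (m : nat -> R) (th ph : nat -> R) (i : nat) : R :=
  sumR n (fun a => sumR n (fun b =>
    if Nat.ltb a b then m a * m b * (gd (qdot th ph a b) * Dph th ph i a b) else 0)).

Definition Good (n : nat) (th ph : nat -> R) : Prop :=
  forall a b, (a < n)%nat -> (b < n)%nat -> a <> b -> -1 < qdot th ph a b < 1.

Lemma upd_same (x : nat -> R) i : forall k, upd x i (x i) k = x k.
Proof. intros k. unfold upd. destruct (Nat.eqb_spec k i); subst; auto. Qed.

Lemma qdot_upd_th th ph i a b : qdot (upd th i (th i)) ph a b = qdot th ph a b.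
Proof. unfold qdot. rewrite !upd_same. auto. Qed.
Lemma qdot_upd_ph th ph i a b : qdot th (upd ph i (ph i)) a b = qdot th ph a b.
Proof. unfold qdot. rewrite !upd_same. auto. Qed.

Lemma dth_V n m th ph i : Good n th ph -> dth (Vpot n m) i th ph = Ft n m th ph i.
Proof.
  intros HG. unfold dth.
  rewrite (Derive_ext _ (fun s => Vn n m (upd th i s) ph)) by (intros; apply Vpot_Vn).
  apply is_derive_unique. unfold Vn, Ft.
  apply (is_derive_sumR n (fun s a => sumR n (fun b => if Nat.ltb a b then m a * m b * gf (qdot (upd th i s) ph a b) else 0))).
  intros a Ha.
  apply (is_derive_sumR n (fun s b => if Nat.ltb a b then m a * m b * gf (qdot (upd th i s) ph a b) else 0)).
  intros b Hb. destruct (Nat.ltb_spec a b).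
  - apply is_derive_scal.
    apply (comp' gf (fun s => qdot (upd th i s) ph a b)).
    + rewrite qdot_upd_th. apply gf_deriv. apply HG; auto; lia.
    + apply qdot_dth. lia.
  - apply (is_derive_const 0).
Qed.

Lemma dph_V n m th ph i : Good n th ph -> dph (Vpot n m) i th ph = Fp n m th ph i.
Proof.
  intros HG. unfold dph.
  rewrite (Derive_ext _ (fun s => Vn n m th (upd ph i s))) by (intros; apply Vpot_Vn).
  apply is_derive_unique. unfold Vn, Fp.
  apply (is_derive_sumR n (fun s a => sumR n (fun b => if Nat.ltb a b then m a * m b * gf (qdot th (upd ph i s) a b) else 0))).
  intros a Ha.
  apply (is_derive_sumR n (fun s b => if Nat.ltb a b then m a * m b * gf (qdot th (upd ph i s) a b) else 0)).
  intros b Hb. destruct (Nat.ltb_spec a b).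
  - apply is_derive_scal.
    apply (comp' gf (fun s => qdot th (upd ph i s) a b)).
    + rewrite qdot_upd_ph. apply gf_deriv. apply HG; auto; lia.
    + apply qdot_dph. lia.
  - apply (is_derive_const 0).
Qed.

Lemma loc_between (f : R -> R) x : continuous f x -> -1 < f x < 1 ->
  locally x (fun t => -1 < f t < 1).
Proof.
  intros Hc Hb.
  assert (He : 0 < Rmin (1 - f x) (f x + 1)) by (apply Rmin_pos; lra).
  apply (filter_imp (fun t => ball (f x) (mkposreal _ He) (f t))).
  2: apply (Hc (ball (f x) (mkposreal _ He))); apply locally_ball.
  intros y Hy. unfold ball in Hy; simpl in Hy. unfold AbsRing_ball, abs, minus, plus, opp in Hy.
  simpl in Hy. apply Rabs_def2 in Hy. destruct Hy as [H1 H2].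
  pose proof (Rmin_l (1 - f x) (f x + 1)). pose proof (Rmin_r (1 - f x) (f x + 1)). lra.
Qed.

Lemma loc_forall (P : nat -> R -> Prop) n x : (forall k, (k < n)%nat -> locally x (P k)) ->
  locally x (fun t => forall k, (k < n)%nat -> P k t).
Proof.
  induction n; intros H.
  - apply filter_forall. intros; lia.
  - apply (filter_imp (fun t => (forall k, (k < n)%nat -> P k t) /\ P n t)).
    + intros t [H1 H2] k Hk. destruct (Nat.eq_dec k n); [subst; auto|]. apply H1; lia.
    + apply filter_and; [apply IHn; intros; apply H; lia|apply H; lia].
Qed.

Lemma Good_loc_th n th ph j : Good n th ph -> locally (th j) (fun t => Good n (upd th j t) ph).
Proof.
  intros HG. unfold Good.
  apply (filter_imp (fun t => forall a, (a < n)%nat -> forall b, (b < n)%nat -> a <> b -> -1 < qdot (upd th j t) ph a b < 1)).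
  { intros t H a b Ha Hb. apply H; auto. }
  apply (loc_forall (fun a t => forall b, (b < n)%nat -> a <> b -> -1 < qdot (upd th j t) ph a b < 1)).
  intros a Ha.
  apply (loc_forall (fun b t => a <> b -> -1 < qdot (upd th j t) ph a b < 1)).
  intros b Hb. destruct (Nat.eq_dec a b).
  - apply filter_forall. intros; contradiction.
  - apply (filter_imp (fun t => -1 < qdot (upd th j t) ph a b < 1)); [auto|].
    apply loc_between.
    + apply (ex_derive_continuous (fun t => qdot (upd th j t) ph a b) (th j)). eexists. apply qdot_dth; auto.
    + rewrite qdot_upd_th. apply HG; auto.
Qed.

Lemma Good_loc_ph n th ph j : Good n th ph -> locally (ph j) (fun t => Good n th (upd ph j t)).
Proof.
  intros HG. unfold Good.
  apply (filter_imp (fun t => forall a, (a < n)%nat -> forall b, (b < n)%nat -> a <> b -> -1 < qdot th (upd ph j t) a b < 1)).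
  { intros t H a b Ha Hb. apply H; auto. }
  apply (loc_forall (fun a t => forall b, (b < n)%nat -> a <> b -> -1 < qdot th (upd ph j t) a b < 1)).
  intros a Ha.
  apply (loc_forall (fun b t => a <> b -> -1 < qdot th (upd ph j t) a b < 1)).
  intros b Hb. destruct (Nat.eq_dec a b).
  - apply filter_forall. intros; contradiction.
  - apply (filter_imp (fun t => -1 < qdot th (upd ph j t) a b < 1)); [auto|].
    apply loc_between.
    + apply (ex_derive_continuous (fun t => qdot th (upd ph j t) a b) (ph j)). eexists. apply qdot_dph; auto.
    + rewrite qdot_upd_ph. apply HG; auto.
Qed.

Definition eq0 : nat -> R := fun _ => PI / 2.

Lemma prod_rule (q D : R -> R) x q' D' : -1 < q x < 1 -> is_derive q x q' -> is_derive D x D' ->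
  is_derive (fun t => gd (q t) * D t) x (gdd (q x) * q' * D x + gd (q x) * D').
Proof.
  intros Hb Hq HD.
  pose proof (is_derive_mult (fun t => gd (q t)) D x (gdd (q x) * q') D') as H.
  simpl in H. unfold mult, plus in H; simpl in H.
  apply H; auto.
  - apply comp'; auto. apply gd_deriv; auto.
  - intros; unfold mult; simpl; ring.
Qed.

Definition Eth (ph : nat -> R) (i j a b : nat) : R :=
  (if Nat.eqb a i then ((if Nat.eqb a j then - Cm ph a b else 0) + (if Nat.eqb b j then 1 else 0)) else 0)
  + (if Nat.eqb b i then ((if Nat.eqb b j then - Cm ph b a else 0) + (if Nat.eqb a j then 1 else 0)) else 0).
Definition Eph (ph : nat -> R) (i j a b : nat) : R :=
  (if Nat.eqb a i then ((if Nat.eqb a j then - Cm ph a b else 0) + (if Nat.eqb b j then Cm ph a b else 0)) else 0)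
  + (if Nat.eqb b i then ((if Nat.eqb b j then - Cm ph b a else 0) + (if Nat.eqb a j then Cm ph b a else 0)) else 0).

Ltac dcases a b i j :=
  destruct (Nat.eqb_spec a i); destruct (Nat.eqb_spec b i);
  destruct (Nat.eqb_spec a j); destruct (Nat.eqb_spec b j); try (exfalso; lia); subst.

Lemma Dth_th ph i j a b : a <> b ->
  is_derive (fun t => Dth (upd eq0 j t) ph i a b) (PI/2) (Eth ph i j a b).
Proof.
  intros Hab. unfold Dth, Pu, Eth, upd, eq0.
  dcases a b i j; auto_derive; auto; rewrite ?sin_PI2, ?cos_PI2; unfold Cm; ring.
Qed.

Lemma Dph_ph ph i j a b : a <> b ->
  is_derive (fun t => Dph eq0 (upd ph j t) i a b) (ph j) (Eph ph i j a b).
Proof.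
  intros Hab. unfold Dph, Qm, Eph, upd, eq0, Cm.
  dcases a b i j; auto_derive; auto; rewrite ?sin_PI2, ?cos_PI2; ring.
Qed.

Lemma Dth_ph ph i j a b : a <> b ->
  is_derive (fun t => Dth eq0 (upd ph j t) i a b) (ph j) 0.
Proof.
  intros Hab. unfold Dth, Pu, upd, eq0, Cm.
  dcases a b i j; auto_derive; auto; rewrite ?sin_PI2, ?cos_PI2; ring.
Qed.

Lemma Dph_th ph i j a b : a <> b ->
  is_derive (fun t => Dph (upd eq0 j t) ph i a b) (PI/2) 0.
Proof.
  intros Hab. unfold Dph, Qm, upd, eq0.
  dcases a b i j; auto_derive; auto; rewrite ?sin_PI2, ?cos_PI2; ring.
Qed.

Lemma Dth_base ph i a b : Dth eq0 ph i a b = 0.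
Proof. unfold Dth, Pu, eq0. rewrite sin_PI2, cos_PI2. destruct (Nat.eqb a i); destruct (Nat.eqb b i); ring. Qed.

Lemma qdot_base ph a b : qdot eq0 ph a b = Cm ph a b.
Proof. unfold qdot, Cm, eq0. rewrite sin_PI2, cos_PI2. ring. Qed.

Lemma Dph_base ph i a b : Dph eq0 ph i a b =
  (if Nat.eqb a i then Qm ph a b else 0) + (if Nat.eqb b i then Qm ph b a else 0).
Proof. unfold Dph, eq0. rewrite sin_PI2. ring. Qed.

Lemma isd_val (f : R -> R) x l l' : is_derive f x l -> l = l' -> is_derive f x l'.
Proof. intros; subst; auto. Qed.

Lemma Dth_upd th ph k i a b : Dth (upd th k (th k)) ph i a b = Dth th ph i a b.
Proof. unfold Dth, Pu. rewrite !upd_same. auto. Qed.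
Lemma Dph_upd th ph k i a b : Dph th (upd ph k (ph k)) i a b = Dph th ph i a b.
Proof. unfold Dph, Qm. rewrite !upd_same. auto. Qed.
Lemma Dth_upd' th ph k i a b : Dth th (upd ph k (ph k)) i a b = Dth th ph i a b.
Proof. unfold Dth, Pu, Cm. rewrite !upd_same. auto. Qed.
Lemma Dph_upd' th ph k i a b : Dph (upd th k (th k)) ph i a b = Dph th ph i a b.
Proof. unfold Dph. rewrite !upd_same. auto. Qed.

Lemma Gb n phi0 a b : Good n eq0 phi0 -> (a < n)%nat -> (b < n)%nat -> a <> b -> -1 < Cm phi0 a b < 1.
Proof. intros HG Ha Hb Hab. rewrite <- qdot_base. apply HG; auto. Qed.

Lemma Ft_th n m phi0 i j : Good n eq0 phi0 ->
  is_derive (fun t => Ft n m (upd eq0 j t) phi0 i) (PI/2)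
   (sumR n (fun a => sumR n (fun b => if Nat.ltb a b then m a * m b * (gd (Cm phi0 a b) * Eth phi0 i j a b) else 0))).
Proof.
  intros HG. unfold Ft.
  apply (is_derive_sumR n (fun t a => sumR n (fun b => if Nat.ltb a b then m a * m b * (gd (qdot (upd eq0 j t) phi0 a b) * Dth (upd eq0 j t) phi0 i a b) else 0))).
  intros a Ha.
  apply (is_derive_sumR n (fun t b => if Nat.ltb a b then m a * m b * (gd (qdot (upd eq0 j t) phi0 a b) * Dth (upd eq0 j t) phi0 i a b) else 0)).
  intros b Hb. destruct (Nat.ltb_spec a b) as [Hlt|Hlt]; [|apply (is_derive_const 0)].
  apply is_derive_scal.
  assert (Hab : a <> b) by lia.
  assert (Hq : qdot (upd eq0 j (PI/2)) phi0 a b = Cm phi0 a b)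
    by exact (eq_trans (qdot_upd_th eq0 phi0 j a b) (qdot_base phi0 a b)).
  assert (HD : Dth (upd eq0 j (PI/2)) phi0 i a b = 0)
    by exact (eq_trans (Dth_upd eq0 phi0 j i a b) (Dth_base phi0 i a b)).
  pose proof (prod_rule (fun t => qdot (upd eq0 j t) phi0 a b) (fun t => Dth (upd eq0 j t) phi0 i a b) (PI/2) _ _
     ltac:(cbv beta; rewrite Hq; apply (Gb n); auto) (qdot_dth eq0 phi0 j a b Hab) (Dth_th phi0 i j a b Hab)) as P.
  cbv beta in P. rewrite Hq, HD in P.
  replace (gd (Cm phi0 a b) * Eth phi0 i j a b) with
    (gdd (Cm phi0 a b) * Dth eq0 phi0 j a b * 0 + gd (Cm phi0 a b) * Eth phi0 i j a b) by ring.
  exact P.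
Qed.

Lemma Fp_ph n m phi0 i j : Good n eq0 phi0 ->
  is_derive (fun t => Fp n m eq0 (upd phi0 j t) i) (phi0 j)
   (sumR n (fun a => sumR n (fun b => if Nat.ltb a b then m a * m b *
      (gdd (Cm phi0 a b) * Dph eq0 phi0 j a b * Dph eq0 phi0 i a b + gd (Cm phi0 a b) * Eph phi0 i j a b) else 0))).
Proof.
  intros HG. unfold Fp.
  apply (is_derive_sumR n (fun t a => sumR n (fun b => if Nat.ltb a b then m a * m b * (gd (qdot eq0 (upd phi0 j t) a b) * Dph eq0 (upd phi0 j t) i a b) else 0))).
  intros a Ha.
  apply (is_derive_sumR n (fun t b => if Nat.ltb a b then m a * m b * (gd (qdot eq0 (upd phi0 j t) a b) * Dph eq0 (upd phi0 j t) i a b) else 0)).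
  intros b Hb. destruct (Nat.ltb_spec a b) as [Hlt|Hlt]; [|apply (is_derive_const 0)].
  apply is_derive_scal.
  assert (Hab : a <> b) by lia.
  assert (Hq : qdot eq0 (upd phi0 j (phi0 j)) a b = Cm phi0 a b)
    by exact (eq_trans (qdot_upd_ph eq0 phi0 j a b) (qdot_base phi0 a b)).
  pose proof (prod_rule (fun t => qdot eq0 (upd phi0 j t) a b) (fun t => Dph eq0 (upd phi0 j t) i a b) (phi0 j) _ _
     ltac:(cbv beta; rewrite Hq; apply (Gb n); auto) (qdot_dph eq0 phi0 j a b Hab) (Dph_ph phi0 i j a b Hab)) as P.
  cbv beta in P. rewrite Hq, Dph_upd in P.
  exact P.
Qed.

Lemma Ft_ph n m phi0 i j : Good n eq0 phi0 ->
  is_derive (fun t => Ft n m eq0 (upd phi0 j t) i) (phi0 j) 0.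
Proof.
  intros HG. unfold Ft.
  apply (isd_val _ _ (sumR n (fun a => sumR n (fun b => if Nat.ltb a b then m a * m b * 0 else 0)))).
  2:{ apply sumR_zero; intros; apply sumR_zero; intros; destruct (Nat.ltb _ _); ring. }
  apply (is_derive_sumR n (fun t a => sumR n (fun b => if Nat.ltb a b then m a * m b * (gd (qdot eq0 (upd phi0 j t) a b) * Dth eq0 (upd phi0 j t) i a b) else 0))).
  intros a Ha.
  apply (is_derive_sumR n (fun t b => if Nat.ltb a b then m a * m b * (gd (qdot eq0 (upd phi0 j t) a b) * Dth eq0 (upd phi0 j t) i a b) else 0)).
  intros b Hb. destruct (Nat.ltb_spec a b) as [Hlt|Hlt]; [|apply (is_derive_const 0)].
  apply is_derive_scal.
  assert (Hab : a <> b) by lia.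
  assert (Hq : qdot eq0 (upd phi0 j (phi0 j)) a b = Cm phi0 a b)
    by exact (eq_trans (qdot_upd_ph eq0 phi0 j a b) (qdot_base phi0 a b)).
  pose proof (prod_rule (fun t => qdot eq0 (upd phi0 j t) a b) (fun t => Dth eq0 (upd phi0 j t) i a b) (phi0 j) _ _
     ltac:(cbv beta; rewrite Hq; apply (Gb n); auto) (qdot_dph eq0 phi0 j a b Hab) (Dth_ph phi0 i j a b Hab)) as P.
  cbv beta in P. rewrite Hq, Dth_upd', Dth_base in P.
  replace 0 with (gdd (Cm phi0 a b) * Dph eq0 phi0 j a b * 0 + gd (Cm phi0 a b) * 0) at 1 by ring.
  exact P.
Qed.

Lemma Fp_th n m phi0 i j : Good n eq0 phi0 ->
  is_derive (fun t => Fp n m (upd eq0 j t) phi0 i) (PI/2) 0.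
Proof.
  intros HG. unfold Fp.
  apply (isd_val _ _ (sumR n (fun a => sumR n (fun b => if Nat.ltb a b then m a * m b * 0 else 0)))).
  2:{ apply sumR_zero; intros; apply sumR_zero; intros; destruct (Nat.ltb _ _); ring. }
  apply (is_derive_sumR n (fun t a => sumR n (fun b => if Nat.ltb a b then m a * m b * (gd (qdot (upd eq0 j t) phi0 a b) * Dph (upd eq0 j t) phi0 i a b) else 0))).
  intros a Ha.
  apply (is_derive_sumR n (fun t b => if Nat.ltb a b then m a * m b * (gd (qdot (upd eq0 j t) phi0 a b) * Dph (upd eq0 j t) phi0 i a b) else 0)).
  intros b Hb. destruct (Nat.ltb_spec a b) as [Hlt|Hlt]; [|apply (is_derive_const 0)].
  apply is_derive_scal.
  assert (Hab : a <> b) by lia.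
  assert (Hq : qdot (upd eq0 j (PI/2)) phi0 a b = Cm phi0 a b)
    by exact (eq_trans (qdot_upd_th eq0 phi0 j a b) (qdot_base phi0 a b)).
  pose proof (prod_rule (fun t => qdot (upd eq0 j t) phi0 a b) (fun t => Dph (upd eq0 j t) phi0 i a b) (PI/2) _ _
     ltac:(cbv beta; rewrite Hq; apply (Gb n); auto) (qdot_dth eq0 phi0 j a b Hab) (Dph_th phi0 i j a b Hab)) as P.
  cbv beta in P. rewrite Hq, Dth_base in P.
  replace 0 with (gdd (Cm phi0 a b) * 0 * Dph (upd eq0 j (PI / 2)) phi0 i a b + gd (Cm phi0 a b) * 0) at 1 by ring.
  exact P.
Qed.

Lemma Cm_sym ph a b : Cm ph a b = Cm ph b a.
Proof. unfold Cm; ring. Qed.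
Lemma Qm_anti ph a b : Qm ph a b = - Qm ph b a.
Proof. unfold Qm; ring. Qed.
Lemma Qm_sq ph a b : Qm ph a b * Qm ph a b = 1 - Cm ph a b * Cm ph a b.
Proof.
  unfold Qm, Cm. pose proof (sin2_cos2 (ph a)). pose proof (sin2_cos2 (ph b)).
  unfold Rsqr in *. nra.
Qed.
Lemma inv_sin3 c x : -1 < c < 1 -> x / sin (acos c) ^ 3 = x * gd c.
Proof.
  intros H. rewrite sin_acos by lra. unfold gd, Rsqr.
  assert (Hp : 0 < 1 - c*c) by nra.
  assert (Hs := sqrt_sqrt (1 - c*c) (Rlt_le _ _ Hp)).
  assert (Hq := sqrt_lt_R0 _ Hp).
  rewrite <- Hs at 2. field. lra.
Qed.
Lemma gdd_gd c : -1 < c < 1 -> gdd c * (1 - c * c) = 3 * c * gd c.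
Proof.
  intros H. unfold gdd, gd.
  assert (Hp : 0 < 1 - c*c) by nra.
  assert (Hq := sqrt_lt_R0 _ Hp). field. lra.
Qed.

Lemma sdist_base phi0 a b : sdist eq0 phi0 a b = acos (Cm phi0 a b).
Proof. unfold sdist. rewrite qdot_base. auto. Qed.

Lemma sumR_opp n f : sumR n (fun k => - f k) = - sumR n f.
Proof. induction n; simpl; [lra|]. rewrite IHn. lra. Qed.

Ltac bnd n phi0 HG := match goal with |- context [Cm phi0 ?x ?y] =>
  let H := fresh in pose proof (Gb n phi0 x y HG ltac:(lia) ltac:(lia) ltac:(lia)) as H; lra end.

Ltac finH n phi0 HG := unfold Hoff, Goff; rewrite ?sdist_base;
  rewrite ?inv_sin3, ?cos_acos by bnd n phi0 HG;
  first [ring | rewrite Cm_sym; ring].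

Lemma Hval n m phi0 i j : (i < n)%nat -> (j < n)%nat -> Good n eq0 phi0 ->
  sumR n (fun a => sumR n (fun b => if Nat.ltb a b then m a * m b * (gd (Cm phi0 a b) * Eth phi0 i j a b) else 0))
  = Hexp n m (sdist eq0 phi0) i j.
Proof.
  intros Hi Hj HG. unfold Hexp.
  destruct (Nat.eqb_spec i j).
  - subst j. rewrite <- sumR_opp.
    rewrite (pair_diag n i _ (fun l => - (if Nat.eqb l i then 0 else Hoff m (sdist eq0 phi0) i l * cos (sdist eq0 phi0 i l)))); auto.
    + apply sumR_ext. intros l _. destruct (Nat.eqb l i); ring.
    + intros a b Ha Hb Hlt. unfold Eth.
      dcases a b i i; simpl; try ring; finH n phi0 HG.
  - apply (pair_off n i j); auto.
    intros a b Ha Hb Hlt. unfold Eth.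
    dcases a b i j; simpl; try ring; finH n phi0 HG.
Qed.

Lemma Qm_sq2 ph a b : Qm ph a b * Qm ph a b = 1 - Cm ph b a * Cm ph b a.
Proof. rewrite Qm_sq, Cm_sym. auto. Qed.

Ltac finG n phi0 HG :=
  unfold Goff; rewrite ?sdist_base; rewrite ?inv_sin3, ?cos_acos by bnd n phi0 HG;
  try rewrite Qm_anti; try rewrite Cm_sym;
  match goal with |- context [Qm phi0 ?x ?y] =>
     pose proof (Qm_sq phi0 x y); pose proof (Qm_sq2 phi0 x y) end;
  match goal with |- context [gdd (Cm phi0 ?x ?y)] =>
     let H := fresh in assert (H : -1 < Cm phi0 x y < 1) by bnd n phi0 HG;
     pose proof (gdd_gd _ H) end;
  match goal with
  | Hq : Qm phi0 ?x ?y * Qm phi0 ?x ?y = 1 - Cm phi0 ?u ?v * Cm phi0 ?u ?v,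
    Hd : gdd (Cm phi0 ?u ?v) * _ = _ |- ?mm ?p * ?mm ?r * _ = _ =>
    let E1 := fresh in let E2 := fresh in
    assert (E1 : mm p * mm r * gdd (Cm phi0 u v) * (Qm phi0 x y * Qm phi0 x y) =
                 mm p * mm r * gdd (Cm phi0 u v) * (1 - Cm phi0 u v * Cm phi0 u v)) by (rewrite Hq; ring);
    assert (E2 : mm p * mm r * (gdd (Cm phi0 u v) * (1 - Cm phi0 u v * Cm phi0 u v)) =
                 mm p * mm r * (3 * Cm phi0 u v * gd (Cm phi0 u v))) by (rewrite Hd; ring);
    lra
  end.

Lemma Gval n m phi0 i j : (i < n)%nat -> (j < n)%nat -> Good n eq0 phi0 ->
  sumR n (fun a => sumR n (fun b => if Nat.ltb a b then m a * m b *
      (gdd (Cm phi0 a b) * Dph eq0 phi0 j a b * Dph eq0 phi0 i a b + gd (Cm phi0 a b) * Eph phi0 i j a b) else 0))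
  = Gexp n m (sdist eq0 phi0) i j.
Proof.
  intros Hi Hj HG. unfold Gexp.
  destruct (Nat.eqb_spec i j).
  - subst j. rewrite <- sumR_opp.
    rewrite (pair_diag n i _ (fun l => - (if Nat.eqb l i then 0 else Goff m (sdist eq0 phi0) i l))); auto.
    + apply sumR_ext. intros l _. destruct (Nat.eqb l i); ring.
    + intros a b Ha Hb Hlt. rewrite !Dph_base. unfold Eph.
      dcases a b i i; simpl; try ring; finG n phi0 HG.
  - apply (pair_off n i j); auto.
    intros a b Ha Hb Hlt. rewrite !Dph_base. unfold Eph.
    dcases a b i j; simpl; try ring; finG n phi0 HG.
Qed.

Lemma Hfull n m phi0 i j : Good n eq0 phi0 -> (i < n)%nat -> (j < n)%nat ->
  is_derive (fun t => dth (Vpot n m) i (upd eq0 j t) phi0) (PI/2) (Hexp n m (sdist eq0 phi0) i j).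
Proof.
  intros HG Hi Hj.
  apply (is_derive_ext_loc (fun t => Ft n m (upd eq0 j t) phi0 i)).
  - apply (filter_imp (fun t => Good n (upd eq0 j t) phi0)).
    + intros t Ht. symmetry. apply dth_V; auto.
    + apply (Good_loc_th n eq0 phi0 j HG).
  - rewrite <- Hval by auto. apply Ft_th; auto.
Qed.

Lemma Gfull n m phi0 i j : Good n eq0 phi0 -> (i < n)%nat -> (j < n)%nat ->
  is_derive (fun t => dph (Vpot n m) i eq0 (upd phi0 j t)) (phi0 j) (Gexp n m (sdist eq0 phi0) i j).
Proof.
  intros HG Hi Hj.
  apply (is_derive_ext_loc (fun t => Fp n m eq0 (upd phi0 j t) i)).
  - apply (filter_imp (fun t => Good n eq0 (upd phi0 j t))).
    + intros t Ht. symmetry. apply dph_V; auto.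
    + apply (Good_loc_ph n eq0 phi0 j HG).
  - rewrite <- Gval by auto. apply Fp_ph; auto.
Qed.

Lemma M1full n m phi0 i j : Good n eq0 phi0 ->
  is_derive (fun t => dth (Vpot n m) i eq0 (upd phi0 j t)) (phi0 j) 0.
Proof.
  intros HG.
  apply (is_derive_ext_loc (fun t => Ft n m eq0 (upd phi0 j t) i)).
  - apply (filter_imp (fun t => Good n eq0 (upd phi0 j t))).
    + intros t Ht. symmetry. apply dth_V; auto.
    + apply (Good_loc_ph n eq0 phi0 j HG).
  - apply Ft_ph; auto.
Qed.

Lemma M2full n m phi0 i j : Good n eq0 phi0 ->
  is_derive (fun t => dph (Vpot n m) i (upd eq0 j t) phi0) (PI/2) 0.
Proof.
  intros HG.
  apply (is_derive_ext_loc (fun t => Fp n m (upd eq0 j t) phi0 i)).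
  - apply (filter_imp (fun t => Good n (upd eq0 j t) phi0)).
    + intros t Ht. symmetry. apply dph_V; auto.
    + apply (Good_loc_th n eq0 phi0 j HG).
  - apply Fp_th; auto.
Qed.

Lemma Good_of n phi0 : (forall i j, (i < n)%nat -> (j < n)%nat -> i <> j ->
     sdist (fun _ => PI / 2) phi0 i j <> 0 /\ sdist (fun _ => PI / 2) phi0 i j <> PI) ->
  Good n eq0 phi0.
Proof.
  intros H a b Ha Hb Hab. destruct (H a b Ha Hb Hab) as [H1 H2].
  unfold sdist in *. fold eq0 in H1, H2.
  unfold acos in H1, H2.
  destruct (Rle_dec (qdot eq0 phi0 a b) (-1)); [congruence|].
  destruct (Rle_dec 1 (qdot eq0 phi0 a b)); [congruence|]. lra.
Qed.

Lemma Vpot_ext n m th ph th' ph' : (forall k, (k < n)%nat -> th k = th' k) ->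
  (forall k, (k < n)%nat -> ph k = ph' k) -> Vpot n m th ph = Vpot n m th' ph'.
Proof.
  intros H1 H2. unfold Vpot. apply sumR_ext. intros a Ha. apply sumR_ext. intros b Hb.
  unfold sdist, qdot. rewrite !H1, !H2 by auto. auto.
Qed.

Lemma dth_ext n m i th ph th' ph' : (i < n)%nat -> (forall k, (k < n)%nat -> th k = th' k) ->
  (forall k, (k < n)%nat -> ph k = ph' k) -> dth (Vpot n m) i th ph = dth (Vpot n m) i th' ph'.
Proof.
  intros Hi H1 H2. unfold dth. rewrite H1 by auto. apply Derive_ext. intros s.
  apply Vpot_ext; auto. intros k Hk. unfold upd. destruct (Nat.eqb k i); auto.
Qed.

Lemma dph_ext n m i th ph th' ph' : (i < n)%nat -> (forall k, (k < n)%nat -> th k = th' k) ->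
  (forall k, (k < n)%nat -> ph k = ph' k) -> dph (Vpot n m) i th ph = dph (Vpot n m) i th' ph'.
Proof.
  intros Hi H1 H2. unfold dph. rewrite H2 by auto. apply Derive_ext. intros s.
  apply Vpot_ext; auto. intros k Hk. unfold upd. destruct (Nat.eqb k i); auto.
Qed.

Lemma dth_U n m i th ph : dth (Upot n m) i th ph = - dth (Vpot n m) i th ph.
Proof. unfold dth, Upot. apply Derive_opp. Qed.
Lemma dph_U n m i th ph : dph (Upot n m) i th ph = - dph (Vpot n m) i th ph.
Proof. unfold dph, Upot. apply Derive_opp. Qed.

Definition Xb (n : nat) (phi0 : nat -> R) (w : R) (m : nat -> R) (k : nat) : R :=
  match Nat.div k n with
  | 0%nat => PI / 2
  | 1%nat => phi0 (Nat.modulo k n)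
  | 2%nat => 0
  | 3%nat => w * m (Nat.modulo k n)
  | _ => 0
  end.

Lemma dm n q i : (i < n)%nat -> Nat.div (q * n + i) n = q /\ Nat.modulo (q * n + i) n = i.
Proof.
  intros Hi. split.
  - symmetry. apply (Nat.div_unique _ _ _ i); lia.
  - symmetry. apply (Nat.mod_unique _ _ q); lia.
Qed.

Lemma Xb_eval n phi0 w m q i : (i < n)%nat -> Xb n phi0 w m (q * n + i) =
  match q with 0%nat => PI / 2 | 1%nat => phi0 i | 2%nat => 0 | 3%nat => w * m i | _ => 0 end.
Proof. intros Hi. unfold Xb. destruct (dm n q i Hi) as [H1 H2]. rewrite H1, H2. auto. Qed.

Lemma Xcomp n phi0 w m l q i t : (i < n)%nat ->
  upd (Xb n phi0 w m) l (Xb n phi0 w m l + t) (q * n + i) =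
  Xb n phi0 w m (q * n + i) + (if andb (Nat.eqb (Nat.div l n) q) (Nat.eqb i (Nat.modulo l n)) then t else 0).
Proof.
  intros Hi. unfold upd. destruct (Nat.eqb_spec (q * n + i) l).
  - subst l. destruct (dm n q i Hi) as [H1 H2]. rewrite H1, H2, !Nat.eqb_refl. simpl. auto.
  - destruct (Nat.eqb_spec (Nat.div l n) q); destruct (Nat.eqb_spec i (Nat.modulo l n)); simpl; try ring.
    exfalso. pose proof (Nat.div_mod_eq l n). nia.
Qed.

Lemma blk0 (f : R -> R) (b : bool) c : 0 < c -> (forall t, f t = 0 + (if b then t else 0)) ->
  is_derive (fun t => f t / c) 0 (if b then / c else 0).
Proof.
  intros Hc H. apply (is_derive_ext (fun t => (0 + (if b then t else 0)) / c)).
  { intros; rewrite H; auto. }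
  destruct b; auto_derive; auto; try lra; field; lra.
Qed.

Lemma blk1 (f g : R -> R) (b1 b2 : bool) w c : 0 < c ->
  (forall t, g t = PI / 2 + (if b1 then t else 0)) -> (forall t, f t = w * c + (if b2 then t else 0)) ->
  is_derive (fun t => f t / (c * sin (g t) ^ 2) - w) 0 (if b2 then / c else 0).
Proof.
  intros Hc Hg Hf.
  apply (is_derive_ext (fun t => (w * c + (if b2 then t else 0)) / (c * sin (PI / 2 + (if b1 then t else 0)) ^ 2) - w)).
  { intros; rewrite Hf, Hg; auto. }
  destruct b1; destruct b2; auto_derive; rewrite ?Rplus_0_r, ?sin_PI2, ?cos_PI2;
    try (split; [lra|auto]); try lra; field; lra.
Qed.

Lemma blk2 (f g h : R -> R) (b1 b2 : bool) w c hd : 0 < c ->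
  (forall t, g t = PI / 2 + (if b1 then t else 0)) -> (forall t, f t = w * c + (if b2 then t else 0)) ->
  is_derive h 0 hd ->
  is_derive (fun t => f t ^ 2 * cos (g t) / (c * sin (g t) ^ 3) - h t) 0 (- hd - w ^ 2 * (if b1 then c else 0)).
Proof.
  intros Hc Hg Hf Hh.
  apply (isd_val _ _ (minus ((if b1 then - w ^ 2 * c else 0)) hd)).
  2:{ unfold minus, plus, opp; simpl. destruct b1; ring. }
  apply (is_derive_minus (fun t => f t ^ 2 * cos (g t) / (c * sin (g t) ^ 3)) h); auto.
  apply (is_derive_ext (fun t => (w * c + (if b2 then t else 0)) ^ 2 * cos (PI / 2 + (if b1 then t else 0)) / (c * sin (PI / 2 + (if b1 then t else 0)) ^ 3))).
  { intros; rewrite Hf, Hg; auto. }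
  destruct b1; destruct b2; auto_derive; rewrite ?Rplus_0_r, ?sin_PI2, ?cos_PI2;
    try (split; [lra|auto]); try lra; field; lra.
Qed.

Lemma isd_const (c x : R) : is_derive (fun _ => c) x 0.
Proof. exact (is_derive_const c x). Qed.

Lemma block_main n m phi0 w k l : (3 <= n)%nat -> (forall i, (i < n)%nat -> 0 < m i) ->
  Good n eq0 phi0 -> (k < 4 * n)%nat -> (l < 4 * n)%nat ->
  is_derive (fun t => rotfield n m w (upd (Xb n phi0 w m) l (Xb n phi0 w m l + t)) k) 0
    (Lblock n m (sdist eq0 phi0) w k l).
Proof.
  intros Hn Hm HG Hk Hl.
  unfold rotfield, Lblock. cbv zeta.
  assert (Hn0 : n <> 0%nat) by lia.
  pose proof (Nat.mod_upper_bound k n Hn0) as Hik.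
  pose proof (Nat.mod_upper_bound l n Hn0) as Hjl.
  assert (Hqk : (Nat.div k n < 4)%nat) by (apply Nat.Div0.div_lt_upper_bound; lia).
  assert (Hql : (Nat.div l n < 4)%nat) by (apply Nat.Div0.div_lt_upper_bound; lia).
  set (ik := Nat.modulo k n) in *. set (jl := Nat.modulo l n) in *.
  remember (Nat.div k n) as qk eqn:Eqk. remember (Nat.div l n) as ql eqn:Eql.
  set (Y := fun t => upd (Xb n phi0 w m) l (Xb n phi0 w m l + t)).
  change (fun t => upd (Xb n phi0 w m) l (Xb n phi0 w m l + t)) with Y.
  assert (Vth : forall t k', (k' < n)%nat -> thetas n (Y t) k' = PI / 2 + (if andb (Nat.eqb ql 0) (Nat.eqb k' jl) then t else 0)).
  { intros t k' Hk'. unfold thetas, Y.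
    pose proof (Xcomp n phi0 w m l 0 k' t Hk') as E. rewrite (Xb_eval n phi0 w m 0 k' Hk') in E. rewrite <- Eql in E. exact E. }
  assert (Vph : forall t k', (k' < n)%nat -> phis n (Y t) k' = phi0 k' + (if andb (Nat.eqb ql 1) (Nat.eqb k' jl) then t else 0)).
  { intros t k' Hk'. unfold phis, Y.
    pose proof (Xcomp n phi0 w m l 1 k' t Hk') as E. rewrite (Xb_eval n phi0 w m 1 k' Hk') in E.
    replace (1 * n + k')%nat with (n + k')%nat in E by lia. rewrite <- Eql in E. exact E. }
  assert (Vpt : forall t, pths n (Y t) ik = 0 + (if andb (Nat.eqb ql 2) (Nat.eqb ik jl) then t else 0)).
  { intros t. unfold pths, Y.
    pose proof (Xcomp n phi0 w m l 2 ik t Hik) as E. rewrite (Xb_eval n phi0 w m 2 ik Hik) in E. rewrite <- Eql in E. exact E. }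
  assert (Vpp : forall t, pphs n (Y t) ik = w * m ik + (if andb (Nat.eqb ql 3) (Nat.eqb ik jl) then t else 0)).
  { intros t. unfold pphs, Y.
    pose proof (Xcomp n phi0 w m l 3 ik t Hik) as E. rewrite (Xb_eval n phi0 w m 3 ik Hik) in E. rewrite <- Eql in E. exact E. }
  assert (HDth : is_derive (fun t => dth (Upot n m) ik (thetas n (Y t)) (phis n (Y t))) 0
     (match ql with 0%nat => - Hexp n m (sdist eq0 phi0) ik jl | _ => 0 end)).
  { destruct ql as [|[|[|[|ql']]]]; [| | | |lia].
    - apply (is_derive_ext (fun t => - dth (Vpot n m) ik (upd eq0 jl (PI/2 + t)) phi0)).
      { intros t. rewrite dth_U. f_equal. apply dth_ext; auto.
        - intros k' Hk'. rewrite Vth by auto. unfold upd, eq0. simpl. destruct (Nat.eqb k' jl); simpl; ring.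
        - intros k' Hk'. rewrite Vph by auto. simpl. ring. }
      apply (isd_val _ _ (opp (Hexp n m (sdist eq0 phi0) ik jl * 1))).
      2:{ unfold opp; simpl. ring. }
      apply (is_derive_opp (fun t => dth (Vpot n m) ik (upd eq0 jl (PI/2 + t)) phi0)).
      apply (comp' (fun s => dth (Vpot n m) ik (upd eq0 jl s) phi0) (fun t => PI/2 + t)).
      + replace (PI/2 + 0) with (PI/2) by ring. apply Hfull; auto.
      + auto_derive; auto; ring.
    - apply (is_derive_ext (fun t => - dth (Vpot n m) ik eq0 (upd phi0 jl (phi0 jl + t)))).
      { intros t. rewrite dth_U. f_equal. apply dth_ext; auto.
        - intros k' Hk'. rewrite Vth by auto. unfold eq0. simpl. ring.
        - intros k' Hk'. rewrite Vph by auto. unfold upd. simpl. destruct (Nat.eqb_spec k' jl); simpl; try ring.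
          subst k'. auto. }
      apply (isd_val _ _ (opp (0 * 1))).
      2:{ unfold opp; simpl. ring. }
      apply (is_derive_opp (fun t => dth (Vpot n m) ik eq0 (upd phi0 jl (phi0 jl + t)))).
      apply (comp' (fun s => dth (Vpot n m) ik eq0 (upd phi0 jl s)) (fun t => phi0 jl + t)).
      + replace (phi0 jl + 0) with (phi0 jl) by ring. apply M1full; auto.
      + auto_derive; auto; ring.
    - apply (is_derive_ext (fun t => - dth (Vpot n m) ik eq0 phi0)).
      { intros t. rewrite dth_U. f_equal. apply dth_ext; auto.
        - intros k' Hk'. rewrite Vth by auto. unfold eq0. simpl. ring.
        - intros k' Hk'. rewrite Vph by auto. simpl. ring. }
      apply isd_const.
    - apply (is_derive_ext (fun t => - dth (Vpot n m) ik eq0 phi0)).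
      { intros t. rewrite dth_U. f_equal. apply dth_ext; auto.
        - intros k' Hk'. rewrite Vth by auto. unfold eq0. simpl. ring.
        - intros k' Hk'. rewrite Vph by auto. simpl. ring. }
      apply isd_const. }
  assert (HDph : is_derive (fun t => dph (Upot n m) ik (thetas n (Y t)) (phis n (Y t))) 0
     (match ql with 1%nat => - Gexp n m (sdist eq0 phi0) ik jl | _ => 0 end)).
  { destruct ql as [|[|[|[|ql']]]]; [| | | |lia].
    - apply (is_derive_ext (fun t => - dph (Vpot n m) ik (upd eq0 jl (PI/2 + t)) phi0)).
      { intros t. rewrite dph_U. f_equal. apply dph_ext; auto.
        - intros k' Hk'. rewrite Vth by auto. unfold upd, eq0. simpl. destruct (Nat.eqb k' jl); simpl; ring.
        - intros k' Hk'. rewrite Vph by auto. simpl. ring. }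
      apply (isd_val _ _ (opp (0 * 1))).
      2:{ unfold opp; simpl. ring. }
      apply (is_derive_opp (fun t => dph (Vpot n m) ik (upd eq0 jl (PI/2 + t)) phi0)).
      apply (comp' (fun s => dph (Vpot n m) ik (upd eq0 jl s) phi0) (fun t => PI/2 + t)).
      + replace (PI/2 + 0) with (PI/2) by ring. apply M2full; auto.
      + auto_derive; auto; ring.
    - apply (is_derive_ext (fun t => - dph (Vpot n m) ik eq0 (upd phi0 jl (phi0 jl + t)))).
      { intros t. rewrite dph_U. f_equal. apply dph_ext; auto.
        - intros k' Hk'. rewrite Vth by auto. unfold eq0. simpl. ring.
        - intros k' Hk'. rewrite Vph by auto. unfold upd. simpl. destruct (Nat.eqb_spec k' jl); simpl; try ring.
          subst k'. auto. }
      apply (isd_val _ _ (opp (Gexp n m (sdist eq0 phi0) ik jl * 1))).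
      2:{ unfold opp; simpl. ring. }
      apply (is_derive_opp (fun t => dph (Vpot n m) ik eq0 (upd phi0 jl (phi0 jl + t)))).
      apply (comp' (fun s => dph (Vpot n m) ik eq0 (upd phi0 jl s)) (fun t => phi0 jl + t)).
      + replace (phi0 jl + 0) with (phi0 jl) by ring. apply Gfull; auto.
      + auto_derive; auto; ring.
    - apply (is_derive_ext (fun t => - dph (Vpot n m) ik eq0 phi0)).
      { intros t. rewrite dph_U. f_equal. apply dph_ext; auto.
        - intros k' Hk'. rewrite Vth by auto. unfold eq0. simpl. ring.
        - intros k' Hk'. rewrite Vph by auto. simpl. ring. }
      apply isd_const.
    - apply (is_derive_ext (fun t => - dph (Vpot n m) ik eq0 phi0)).
      { intros t. rewrite dph_U. f_equal. apply dph_ext; auto.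
        - intros k' Hk'. rewrite Vth by auto. unfold eq0. simpl. ring.
        - intros k' Hk'. rewrite Vph by auto. simpl. ring. }
      apply isd_const. }
  assert (Hmik := Hm ik Hik).
  destruct qk as [|[|[|[|qk']]]]; [| | | |lia].
  - apply (isd_val _ _ (if andb (Nat.eqb ql 2) (Nat.eqb ik jl) then / m ik else 0)).
    + apply (blk0 (fun t => pths n (Y t) ik)); auto.
    + destruct ql as [|[|[|[|ql']]]]; simpl; auto.
  - apply (isd_val _ _ (if andb (Nat.eqb ql 3) (Nat.eqb ik jl) then / m ik else 0)).
    + apply (blk1 (fun t => pphs n (Y t) ik) (fun t => thetas n (Y t) ik) (andb (Nat.eqb ql 0) (Nat.eqb ik jl)) (andb (Nat.eqb ql 3) (Nat.eqb ik jl)) w (m ik)); auto.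
    + destruct ql as [|[|[|[|ql']]]]; simpl; auto.
  - apply (isd_val _ _ (- (match ql with 0%nat => - Hexp n m (sdist eq0 phi0) ik jl | _ => 0 end)
        - w ^ 2 * (if andb (Nat.eqb ql 0) (Nat.eqb ik jl) then m ik else 0))).
    + apply (blk2 (fun t => pphs n (Y t) ik) (fun t => thetas n (Y t) ik)
         (fun t => dth (Upot n m) ik (thetas n (Y t)) (phis n (Y t)))
         (andb (Nat.eqb ql 0) (Nat.eqb ik jl)) (andb (Nat.eqb ql 3) (Nat.eqb ik jl)) w (m ik)); auto.
    + destruct ql as [|[|[|[|ql']]]]; simpl; ring.
  - apply (isd_val _ _ (opp (match ql with 1%nat => - Gexp n m (sdist eq0 phi0) ik jl | _ => 0 end))).
    + apply (is_derive_opp (fun t => dph (Upot n m) ik (thetas n (Y t)) (phis n (Y t)))). auto.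
    + unfold opp; simpl. destruct ql as [|[|[|[|ql']]]]; simpl; ring.
Qed.

Theorem lemma1 (n : nat) (m : nat -> R) (phi0 : nat -> R) (w : R) :
  (3 <= n)%nat ->
  (forall i, (i < n)%nat -> 0 < m i) ->
  (* the equatorial configuration lies in W ... *)
  (forall i j, (i < n)%nat -> (j < n)%nat -> i <> j ->
     sdist (fun _ => PI / 2) phi0 i j <> 0 /\ sdist (fun _ => PI / 2) phi0 i j <> PI) ->
  (* ... and is a critical point of V *)
  (forall i, (i < n)%nat ->
     is_derive (fun s => Vpot n m (upd (fun _ => PI / 2) i s) phi0) (PI / 2) 0 /\
     is_derive (fun s => Vpot n m (fun _ => PI / 2) (upd phi0 i s)) (phi0 i) 0) ->
  let th0 := fun _ : nat => PI / 2 in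
  let d := sdist th0 phi0 in
  let X := fun k : nat =>
    match Nat.div k n with
    | 0%nat => PI / 2
    | 1%nat => phi0 (Nat.modulo k n)
    | 2%nat => 0
    | 3%nat => w * m (Nat.modulo k n)
    | _ => 0
    end in
  (* H and G (Hessians of V in theta and in phi) have the stated entries *)
  (forall i j, (i < n)%nat -> (j < n)%nat ->
     is_derive (fun t => dth (Vpot n m) i (upd th0 j t) phi0) (th0 j) (Hexp n m d i j) /\
     is_derive (fun t => dph (Vpot n m) i th0 (upd phi0 j t)) (phi0 j) (Gexp n m d i j)) /\
  (* the Jacobian of the rotating vector field at X_w is the block matrix L *)
  (forall k l, (k < 4 * n)%nat -> (l < 4 * n)%nat ->
     is_derive (fun t => rotfield n m w (upd X l (X l + t)) k) 0 (Lblock n m d w k l)).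
Proof.
  intros Hn Hm HW _ th0 d X.
  assert (HG : Good n eq0 phi0) by (apply Good_of; auto).
  split.
  - intros i j Hi Hj. split.
    + exact (Hfull n m phi0 i j HG Hi Hj).
    + exact (Gfull n m phi0 i j HG Hi Hj).
  - intros k l Hk Hl. exact (block_main n m phi0 w k l Hn Hm HG Hk Hl).
Qed.
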